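(* Let $(X,u)$ and $(Y,v)$ be Čech closure spaces, let $Y^X$ be the set of all continuous maps $(X,u)\to(Y,v)$, and let $\sigma$ be a Čech closure operator on $Y^X$. Then $\sigma$ is proper if and only if every net in $Y^X$ that converges continuously to some $f\in Y^X$ also converges to $f$ in $(Y^X,\sigma)$; and $\sigma$ is admissible if and only if every net in $Y^X$ that converges to some $f$ in $(Y^X,\sigma)$ converges continuously to $f$.
   Context: A Čech closure space $(X,u)$ is a set $X$ with an operator $u:\mathcal P(X)\to\mathcal P(X)$ satisfying $u(\emptyset)=\emptyset$, $A\subset u(A)$, and $u(A\cup B)=u(A)\cup u(B)$. The interior is $\mathrm{int}_u A=X\setminus u(X\setminus A)$; $U$ is a neighbourhood of $x$ if $x\in\mathrm{int}_uU$. A map $f:(X,u)\to(Y,v)$ is continuous if $f(u(A))\subset v(f(A))$ for all $A$. A net converges to a point if it is eventually in every neighbourhood of that point. A net $(f_\lambda)_{\lambda\in\Lambda}$ in $Y^X$ converges continuously to $f\in Y^X$ if, whenever a net $(x_\mu)_{\mu\in M}$ converges to $x$ in $(X,u)$, the net $(f_\lambda(x_\mu))_{(\lambda,\mu)\in\Lambda\times M}$ (coordinatewise order) converges to $f(x)$ in $(Y,v)$. The product $(Z,w)\times(X,u)$ is $Z\times X$ with the closure operator for which the sets $W\times U$ ($W$ a neighbourhood of $z$, $U$ of $x$) form a neighbourhood base at $(z,x)$. For $g:Z\times X\to Y$, $g^*(z)(x)=g(z,x)$. A closure operator $\sigma$ on $Y^X$ is proper if for every closure space $(Z,w)$, continuity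 of $g:(Z,w)\times(X,u)\to(Y,v)$ implies continuity of $g^*:(Z,w)\to(Y^X,\sigma)$; it is admissible if for every closure space $(Z,w)$ and every $g:Z\times X\to Y$ with $g^*(Z)\subset Y^X$, continuity of $g^*:(Z,w)\to(Y^X,\sigma)$ implies continuity of $g$. *)

(* Defs.v *)
Set Implicit Arguments.

Definition set (T : Type) := T -> Prop.
Definition set0 {T : Type} : set T := fun _ => False.
Definition setU {T : Type} (A B : set T) : set T := fun x => A x \/ B x.
Definition setC {T : Type} (A : set T) : set T := fun x => ~ A x.
Definition subset {T : Type} (A B : set T) : Prop := forall x, A x -> B x.
Definition image {T U : Type} (f : T -> U) (A : set T) : set U :=
  fun y => exists x, A x /\ f x = y.

Record closure_op (X : Type) (u : set X -> set X) : Prop := {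
  cl_empty : u set0 = set0;
  cl_ext : forall A, subset A (u A);
  cl_union : forall A B, u (setU A B) = setU (u A) (u B) }.

Definition interior {X : Type} (u : set X -> set X) (A : set X) : set X :=
  setC (u (setC A)).

Definition nbhd {X : Type} (u : set X -> set X) (x : X) (U : set X) : Prop :=
  interior u U x.

Definition ccontinuous {X Y : Type} (u : set X -> set X) (v : set Y -> set Y)
  (f : X -> Y) : Prop := forall A, subset (image f (u A)) (v (image f A)).

Definition cmap {X Y : Type} (u : set X -> set X) (v : set Y -> set Y) :=
  { f : X -> Y | ccontinuous u v f }.

Record directed (L : Type) (le : L -> L -> Prop) : Prop := {
  dir_refl : forall a, le a a;
  dir_trans : forall a b c, le a b -> le b c -> le a c;
  dir_inhabited : inhabited L;
  dir_upper : forall a b, exists c, le a c /\ le b c }.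

Definition net_conv {X : Type} (u : set X -> set X) {L : Type}
  (le : L -> L -> Prop) (s : L -> X) (x : X) : Prop :=
  forall U, nbhd u x U -> exists l0, forall l, le l0 l -> U (s l).

Definition prod_le {L M : Type} (le : L -> L -> Prop) (leM : M -> M -> Prop)
  (p q : L * M) : Prop := le (fst p) (fst q) /\ leM (snd p) (snd q).

Definition cont_conv {X Y : Type} (u : set X -> set X) (v : set Y -> set Y)
  {L : Type} (le : L -> L -> Prop) (s : L -> cmap u v) (f : cmap u v) : Prop :=
  forall (M : Type) (leM : M -> M -> Prop), directed leM ->
  forall (xs : M -> X) (x : X), net_conv u leM xs x ->
    net_conv v (prod_le le leM) (fun p => proj1_sig (s (fst p)) (xs (snd p)))
      (proj1_sig f x).

(* product closure: the sets W x U (W nbhd of z, U nbhd of x) form a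
   neighbourhood base at (z,x) *)
Definition prod_cl {Z X : Type} (w : set Z -> set Z) (u : set X -> set X)
  (A : set (Z * X)) : set (Z * X) :=
  fun p => forall W U, nbhd w (fst p) W -> nbhd u (snd p) U ->
    exists q, A q /\ W (fst q) /\ U (snd q).

(* proper: continuity of g on Z x X implies continuity of g^* : Z -> Y^X.
   G : Z -> Y^X is g^* (G z) x = g (z, x). *)
Definition proper {X Y : Type} (u : set X -> set X) (v : set Y -> set Y)
  (sigma : set (cmap u v) -> set (cmap u v)) : Prop :=
  forall (Z : Type) (w : set Z -> set Z), closure_op w ->
  forall (g : Z * X -> Y) (G : Z -> cmap u v),
    (forall z x, proj1_sig (G z) x = g (z, x)) ->
    ccontinuous (prod_cl w u) v g -> ccontinuous w sigma G.

Definition admissible {X Y : Type} (u : set X -> set X) (v : set Y -> set Y)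
  (sigma : set (cmap u v) -> set (cmap u v)) : Prop :=
  forall (Z : Type) (w : set Z -> set Z), closure_op w ->
  forall (g : Z * X -> Y) (G : Z -> cmap u v),
    (forall z x, proj1_sig (G z) x = g (z, x)) ->
    ccontinuous w sigma G -> ccontinuous (prod_cl w u) v g.
Arguments proper {X Y} u v sigma.
Arguments admissible {X Y} u v sigma.
Arguments cont_conv {X Y} u v {L} le s f.
Arguments net_conv {X} u {L} le s x.

(* Main.v *)
Require Import Defs.
From Stdlib Require Import Classical FunctionalExtensionality PropExtensionality ClassicalEpsilon.

Section Gen.

Lemma cl_mono {X} {u : set X -> set X} : closure_op u -> forall A B, subset A B -> subset (u A) (u B).
Proof.
  intros hu A B hAB x hx.
  assert (E : B = setU A B).
  { apply functional_extensionality; intro y; apply propositional_extensionality;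
    unfold setU; split; auto. intros [H|H]; auto. }
  rewrite E, (cl_union hu). left; exact hx.
Qed.

Lemma not_cl_nbhd {X} {u : set X -> set X} {B x} : closure_op u -> ~ u B x -> nbhd u x (setC B).
Proof.
  intros hu hB H. apply hB. apply (cl_mono hu (setC (setC B)) B); [|exact H].
  intros y hy; apply NNPP; exact hy.
Qed.

Lemma cl_of_meets {X} {u : set X -> set X} {B x} : closure_op u ->
  (forall U, nbhd u x U -> exists y, U y /\ B y) -> u B x.
Proof.
  intros hu H. apply NNPP; intro C.
  destruct (H _ (not_cl_nbhd hu C)) as [y [h1 h2]]. exact (h1 h2).
Qed.

Lemma nbhd_top {X} {u : set X -> set X} x : closure_op u -> nbhd u x (fun _ => True).
Proof.
  intros hu H. assert (H' : u set0 x).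
  { apply (cl_mono hu (setC (fun _ => True)) set0); [|exact H].
    intros y hy; apply hy; exact I. }
  rewrite (cl_empty hu) in H'. exact H'.
Qed.

Lemma nbhd_inter {X} {u : set X -> set X} {x U1 U2} : closure_op u ->
  nbhd u x U1 -> nbhd u x U2 -> nbhd u x (fun y => U1 y /\ U2 y).
Proof.
  intros hu h1 h2 H.
  assert (H' : u (setU (setC U1) (setC U2)) x).
  { apply (cl_mono hu (setC (fun y => U1 y /\ U2 y))); [|exact H].
    intros y hy. unfold setU, setC.
    destruct (classic (U1 y)); auto. }
  rewrite (cl_union hu) in H'. destruct H'; auto.
Qed.

Definition NB {X} (u : set X -> set X) (x : X) := { U : set X | nbhd u x U }.
Definition nble {X} (u : set X -> set X) (x : X) (a b : NB u x) : Prop :=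
  subset (proj1_sig b) (proj1_sig a).

Lemma NB_directed {X} {u : set X -> set X} x : closure_op u -> directed (nble u x).
Proof.
  intros hu. constructor.
  - intros a y h; exact h.
  - intros a b c h1 h2 y h; apply h1, h2, h.
  - constructor. exact (exist _ _ (nbhd_top x hu)).
  - intros [a ha] [b hb]. exists (exist _ _ (nbhd_inter hu ha hb)).
    split; intros y [h1 h2]; auto.
Qed.

Lemma prod_directed {L M} (le : L -> L -> Prop) (leM : M -> M -> Prop) :
  directed le -> directed leM -> directed (prod_le le leM).
Proof.
  intros h1 h2. constructor.
  - intros [a b]; split; simpl; apply dir_refl; auto.
  - intros [a1 a2] [b1 b2] [c1 c2] [p1 p2] [q1 q2]; split; simpl in *;
      eapply dir_trans; eauto.
  - destruct (dir_inhabited h1) as [a]; destruct (dir_inhabited h2) as [b];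
      constructor; exact (a, b).
  - intros [a1 a2] [b1 b2].
    destruct (dir_upper h1 a1 b1) as [c1 [p1 q1]].
    destruct (dir_upper h2 a2 b2) as [c2 [p2 q2]].
    exists (c1, c2); split; split; simpl; auto.
Qed.

Lemma cont_net {X Y} {u : set X -> set X} {v : set Y -> set Y} {f : X -> Y} {L}
  {le : L -> L -> Prop} {s : L -> X} {x} :
  ccontinuous u v f -> closure_op v -> net_conv u le s x ->
  net_conv v le (fun l => f (s l)) (f x).
Proof.
  intros hf hv hs N hN.
  assert (hN' : nbhd u x (fun y => N (f y))).
  { intro H. apply hN.
    assert (H2 := hf _ (f x) (ex_intro _ x (conj H eq_refl))).
    refine (cl_mono hv _ (setC N) _ _ H2). intros y [z [hz <-]]; exact hz. }
  destruct (hs _ hN') as [l0 h]. exists l0; intros l hl; exact (h l hl).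
Qed.

Lemma cl_of_net {X} {u : set X -> set X} {L} {le : L -> L -> Prop} {s : L -> X} {x B} :
  closure_op u -> directed le -> net_conv u le s x -> (forall l, B (s l)) -> u B x.
Proof.
  intros hu hd hs hB. apply NNPP; intro C.
  destruct (hs _ (not_cl_nbhd hu C)) as [l0 h].
  exact (h l0 (dir_refl hd l0) (hB l0)).
Qed.

Lemma net_of_cl {X} {u : set X -> set X} {A x} : closure_op u -> u A x ->
  exists s : NB u x -> X, (forall m, A (s m)) /\ net_conv u (nble u x) s x.
Proof.
  intros hu hA.
  assert (H : forall m : NB u x, exists y, proj1_sig m y /\ A y).
  { intros [U hU]. simpl. apply NNPP; intro C. apply hU.
    apply (cl_mono hu A); [|exact hA].
    intros y hy hUy. apply C. exists y; auto. }
  exists (fun m => proj1_sig (constructive_indefinite_description _ (H m))).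
  split.
  - intro m. exact (proj2 (proj2_sig (constructive_indefinite_description _ (H m)))).
  - intros U hU. exists (exist _ U hU). intros m hm. apply hm.
    exact (proj1 (proj2_sig (constructive_indefinite_description _ (H m)))).
Qed.

Lemma prod_nbhd {Z X} {w : set Z -> set Z} {u : set X -> set X} {p N} :
  nbhd (prod_cl w u) p N -> exists W U, nbhd w (fst p) W /\ nbhd u (snd p) U /\
    forall q, W (fst q) -> U (snd q) -> N q.
Proof.
  intros H. apply NNPP; intro E. apply H. intros W U hW hU.
  apply NNPP; intro C. apply E. exists W, U. repeat split; auto.
  intros q h1 h2. apply NNPP; intro hn. apply C. exists q; auto.
Qed.

Lemma diag_net {Y} {v : set Y -> set Y} {M} {le : M -> M -> Prop} {t : M * M -> Y} {y} :
  directed le -> net_conv v (prod_le le le) t y -> net_conv v le (fun m => t (m, m)) y.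
Proof.
  intros hd H U hU. destruct (H U hU) as [[a b] h].
  destruct (dir_upper hd a b) as [c [h1 h2]].
  exists c. intros m hm. apply h. split; simpl; eapply dir_trans; eauto.
Qed.

Definition frequent {L} (le : L -> L -> Prop) (A : set L) :=
  forall l0, exists l, le l0 l /\ A l.

Definition wopt {L} (le : L -> L -> Prop) (A : set (option L)) : set (option L) :=
  fun z => match z with Some l => A (Some l)
           | None => A None \/ frequent le (fun l => A (Some l)) end.

Lemma freq_union {L} (le : L -> L -> Prop) A B : directed le ->
  frequent le (fun l => A l \/ B l) -> frequent le A \/ frequent le B.
Proof.
  intros hd H. destruct (classic (frequent le A)) as [h|h]; [left; exact h|right].
  assert (h' : exists a0, forall l, le a0 l -> ~ A l).
  { apply NNPP; intro C; apply h; intro l0. apply NNPP; intro D. apply C.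
    exists l0; intros l hl hA; apply D; exists l; auto. }
  destruct h' as [a0 ha0]. intro l0.
  destruct (dir_upper hd a0 l0) as [c [h1 h2]].
  destruct (H c) as [l [hl [hA|hB]]].
  - exfalso; exact (ha0 l (dir_trans hd _ _ _ h1 hl) hA).
  - exists l; split; auto; eapply dir_trans; eauto.
Qed.

Lemma wopt_closure {L} (le : L -> L -> Prop) : directed le -> closure_op (wopt le).
Proof.
  intros hd. constructor.
  - apply functional_extensionality; intros [l|]; [reflexivity|].
    apply propositional_extensionality; split; [|intro H; destruct H].
    intros [H|H]; [exact H|]. destruct (dir_inhabited hd) as [l0].
    destruct (H l0) as [l [_ h]]; exact h.
  - intros A [l|] h; simpl; auto.
  - intros A B. apply functional_extensionality; intros [l|]; [reflexivity|].
    apply propositional_extensionality. unfold setU; simpl. split.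
    + intros [[h|h]|h]; auto.
      destruct (freq_union _ _ _ hd h); auto.
    + intros [[h|h]|[h|h]]; auto.
      * right; intro l0; destruct (h l0) as [l [h1 h2]]; exists l; auto.
      * right; intro l0; destruct (h l0) as [l [h1 h2]]; exists l; auto.
Qed.

Lemma wopt_nbhd_none {L} (le : L -> L -> Prop) W : nbhd (wopt le) None W ->
  exists l0, forall l, le l0 l -> W (Some l).
Proof.
  intros H. apply NNPP; intro C. apply H. right. intro l0.
  apply NNPP; intro D. apply C. exists l0; intros l hl; apply NNPP; intro E.
  apply D; exists l; auto.
Qed.

Lemma wopt_tail_nbhd {L} (le : L -> L -> Prop) l0 : directed le ->
  nbhd (wopt le) None (fun z => match z with None => True | Some l => le l0 l end).
Proof.
  intros hd [H|H].
  - exact (H I).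
  - destruct (H l0) as [l [h1 h2]]. exact (h2 h1).
Qed.

Lemma wopt_some_nbhd {L} (le : L -> L -> Prop) l :
  nbhd (wopt le) (Some l) (fun z => z = Some l).
Proof. intros H. apply H. reflexivity. Qed.

End Gen.

Lemma proper_dir {X Y} (u : set X -> set X) (v : set Y -> set Y)
  (hu : closure_op u) (hv : closure_op v)
  (sigma : set (cmap u v) -> set (cmap u v)) (hs : closure_op sigma) :
  proper u v sigma ->
    forall (L : Type) (le : L -> L -> Prop), directed le ->
    forall (s : L -> cmap u v) (f : cmap u v),
      cont_conv u v le s f -> net_conv sigma le s f.
Proof.
  intros HP L le hdir s f hcc.
  set (G := fun z : option L => match z with Some l => s l | None => f end).
  set (g := fun p : option L * X => proj1_sig (G (fst p)) (snd p)).
  assert (Hg : ccontinuous (prod_cl (wopt le) u) v g).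
  { intros A y [p [hp <-]]. destruct p as [z x]. destruct z as [l|].
    - set (Al := fun x' => A (Some l, x')).
      assert (hx : u Al x).
      { apply (cl_of_meets hu). intros U hU.
        destruct (hp _ U (wopt_some_nbhd le l) hU) as [[z' x'] [hq [hq1 hq2]]].
        simpl in *. subst z'. exists x'; split; auto. }
      assert (H := proj2_sig (s l) Al (proj1_sig (s l) x) (ex_intro _ x (conj hx eq_refl))).
      refine (cl_mono hv _ _ _ _ H).
      intros y' [x' [h <-]]. exists (Some l, x'); split; auto.
    - destruct (classic (forall U, nbhd u x U -> exists x', U x' /\ A (None, x'))) as [Ha|Hb].
      + assert (hx : u (fun x' => A (None, x')) x) by (apply (cl_of_meets hu); exact Ha).
        assert (H := proj2_sig f _ (proj1_sig f x) (ex_intro _ x (conj hx eq_refl))).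
        refine (cl_mono hv _ _ _ _ H).
        intros y' [x' [h <-]]. exists (None, x'); split; auto.
      + apply NNPP; intro hnot.
        assert (HU0 : exists U0, nbhd u x U0 /\ forall x', U0 x' -> ~ A (None, x')).
        { apply NNPP; intro C; apply Hb; intros U hU. apply NNPP; intro D.
          apply C; exists U; split; auto. intros x' h1 h2; apply D; exists x'; auto. }
        destruct HU0 as [U0 [hU0 HU0]].
        assert (hch : forall m : L * NB u x, exists lx : L * X,
                  le (fst m) (fst lx) /\ proj1_sig (snd m) (snd lx) /\ A (Some (fst lx), snd lx)).
        { intros [l0 [U hU]].
          destruct (hp _ _ (wopt_tail_nbhd le l0 hdir) (nbhd_inter hu hU hU0))
            as [[z' x'] [hq [h1 [h2 h3]]]].
          simpl in *. destruct z' as [l|].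
          - exists (l, x'); simpl; auto.
          - exfalso; exact (HU0 x' h3 hq). }
        set (ch := fun m => proj1_sig (constructive_indefinite_description _ (hch m))).
        assert (hchP : forall m, le (fst m) (fst (ch m)) /\ proj1_sig (snd m) (snd (ch m))
                   /\ A (Some (fst (ch m)), snd (ch m))).
        { intro m. exact (proj2_sig (constructive_indefinite_description _ (hch m))). }
        set (xs := fun m => snd (ch m)).
        assert (hxs : net_conv u (prod_le le (nble u x)) xs x).
        { intros U hU. destruct (dir_inhabited hdir) as [l0].
          exists (l0, exist _ U hU). intros [l' m'] [h1 h2]. simpl in h2.
          apply h2. exact (proj1 (proj2 (hchP (l', m')))). }
        assert (hc := hcc _ _ (prod_directed _ _ hdir (NB_directed x hu)) xs x hxs).
        destruct (hc _ (not_cl_nbhd hv hnot)) as [[l0 [l0' U']] hp0].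
        destruct (dir_upper hdir l0 l0') as [l1 [h1 h2]].
        set (m := (l1, U')).
        destruct (hchP m) as [hm1 [hm2 hm3]].
        apply (hp0 (fst (ch m), m)).
        * split; simpl.
          -- eapply dir_trans; [exact hdir| exact h1 | exact hm1].
          -- split; simpl; [exact h2| intros y h; exact h].
        * exists (Some (fst (ch m)), snd (ch m)). split; auto. }
  assert (HGc := HP (option L) (wopt le) (wopt_closure le hdir) g G (fun z x => eq_refl) Hg).
  intros U hU. apply NNPP; intro hno.
  assert (freq : frequent le (fun l => ~ U (s l))).
  { intro l0; apply NNPP; intro C; apply hno; exists l0; intros l hl.
    apply NNPP; intro D; apply C; exists l; auto. }
  set (B := fun z : option L => match z with Some l => ~ U (s l) | None => False end).
  assert (hB : wopt le B None) by (right; exact freq).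
  assert (H := HGc B f (ex_intro _ None (conj hB eq_refl))).
  apply hU. refine (cl_mono hs _ _ _ _ H).
  intros y [z [hz <-]]. destruct z; simpl in *; auto. contradiction.
Qed.

Lemma proper_rev {X Y} (u : set X -> set X) (v : set Y -> set Y)
  (hu : closure_op u) (hv : closure_op v)
  (sigma : set (cmap u v) -> set (cmap u v)) (hs : closure_op sigma) :
  (forall (L : Type) (le : L -> L -> Prop), directed le ->
    forall (s : L -> cmap u v) (f : cmap u v),
      cont_conv u v le s f -> net_conv sigma le s f) -> proper u v sigma.
Proof.
  intros HN Z w hw g G HG Hg A y [z [hz <-]].
  destruct (net_of_cl hw hz) as [zs [hzsA hzs]].
  apply (cl_of_net (s := fun m => G (zs m)) hs (NB_directed z hw)).
  - apply HN. exact (NB_directed z hw). intros M leM hM xs x hxs.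
    assert (hp : net_conv (prod_cl w u) (prod_le (nble w z) leM)
                   (fun p => (zs (fst p), xs (snd p))) (z, x)).
    { intros N hN. destruct (prod_nbhd hN) as [W [U [hW [hU hWU]]]].
      destruct (hzs W hW) as [m0 h0]. destruct (hxs U hU) as [n0 h1].
      exists (m0, n0). intros [m n] [hm hn]. apply hWU; simpl; auto. }
    intros V hV. rewrite HG in hV.
    destruct (cont_net Hg hv hp V hV) as [p0 h]. exists p0; intros p hp'.
    rewrite HG. exact (h p hp').
  - intros m; exists (zs m); split; auto.
Qed.

Lemma adm_dir {X Y} (u : set X -> set X) (v : set Y -> set Y)
  (hu : closure_op u) (hv : closure_op v)
  (sigma : set (cmap u v) -> set (cmap u v)) (hs : closure_op sigma) :
  admissible u v sigma ->
    forall (L : Type) (le : L -> L -> Prop), directed le ->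
    forall (s : L -> cmap u v) (f : cmap u v),
      net_conv sigma le s f -> cont_conv u v le s f.
Proof.
  intros HA L le hdir s f hconv M leM hM xs x hxs.
  set (G := fun z : option L => match z with Some l => s l | None => f end).
  set (g := fun p : option L * X => proj1_sig (G (fst p)) (snd p)).
  assert (HGc : ccontinuous (wopt le) sigma G).
  { intros A y [z [hz <-]]. destruct z as [l|].
    - apply (cl_ext hs). exists (Some l); auto.
    - destruct hz as [hz|hz].
      + apply (cl_ext hs). exists None; auto.
      + apply NNPP; intro hn. destruct (hconv _ (not_cl_nbhd hs hn)) as [l0 h0].
        destruct (hz l0) as [l [hl hAl]]. apply (h0 l hl). exists (Some l); auto. }
  assert (Hg := HA _ _ (wopt_closure le hdir) g G (fun _ _ => eq_refl) HGc).
  assert (hp : net_conv (prod_cl (wopt le) u) (prod_le le leM)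
                 (fun p => (Some (fst p), xs (snd p))) (None, x)).
  { intros N hN. destruct (prod_nbhd hN) as [W [U [hW [hU hWU]]]].
    destruct (wopt_nbhd_none le W hW) as [l0 h0]. destruct (hxs U hU) as [n0 h1].
    exists (l0, n0). intros [l n] [hl hn]. apply hWU; simpl; auto. }
  exact (cont_net Hg hv hp).
Qed.

Lemma adm_rev {X Y} (u : set X -> set X) (v : set Y -> set Y)
  (hu : closure_op u) (hv : closure_op v)
  (sigma : set (cmap u v) -> set (cmap u v)) (hs : closure_op sigma) :
  (forall (L : Type) (le : L -> L -> Prop), directed le ->
    forall (s : L -> cmap u v) (f : cmap u v),
      net_conv sigma le s f -> cont_conv u v le s f) -> admissible u v sigma.
Proof.
  intros HN Z w hw g G HG HGc A y [[z x] [hp <-]].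
  assert (hch : forall m : NB w z * NB u x, exists q, A q /\ proj1_sig (fst m) (fst q)
                   /\ proj1_sig (snd m) (snd q)).
  { intros [[W hW] [U hU]]. exact (hp W U hW hU). }
  set (ch := fun m => proj1_sig (constructive_indefinite_description _ (hch m))).
  assert (hchP : forall m, A (ch m) /\ proj1_sig (fst m) (fst (ch m))
                   /\ proj1_sig (snd m) (snd (ch m))).
  { intro m. exact (proj2_sig (constructive_indefinite_description _ (hch m))). }
  assert (hdirM := prod_directed _ _ (NB_directed z hw) (NB_directed x hu)).
  assert (hz : net_conv w (prod_le (nble w z) (nble u x)) (fun m => fst (ch m)) z).
  { intros W hW. exists (exist _ W hW, exist _ _ (nbhd_top x hu)).
    intros [m1 m2] [h1 h2]. apply h1. exact (proj1 (proj2 (hchP (m1, m2)))). }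
  assert (hx : net_conv u (prod_le (nble w z) (nble u x)) (fun m => snd (ch m)) x).
  { intros U hU. exists (exist _ _ (nbhd_top z hw), exist _ U hU).
    intros [m1 m2] [h1 h2]. apply h2. exact (proj2 (proj2 (hchP (m1, m2)))). }
  assert (hG := cont_net HGc hs hz).
  assert (hcc := HN _ _ hdirM _ _ hG _ _ hdirM _ _ hx).
  assert (hd := diag_net hdirM hcc).
  rewrite <- HG.
  apply (cl_of_net hv hdirM hd).
  intros m. exists (ch m). split; [exact (proj1 (hchP m))|].
  pose proof (HG (fst (ch m)) (snd (ch m))) as E.
  rewrite <- surjective_pairing in E. symmetry; exact E.
Qed.

Theorem theorem5 (X Y : Type) (u : set X -> set X) (v : set Y -> set Y)
  (hu : closure_op u) (hv : closure_op v)
  (sigma : set (cmap u v) -> set (cmap u v)) (hsigma : closure_op sigma) :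
  (proper u v sigma <->
    forall (L : Type) (le : L -> L -> Prop), directed le ->
    forall (s : L -> cmap u v) (f : cmap u v),
      cont_conv u v le s f -> net_conv sigma le s f)
  /\
  (admissible u v sigma <->
    forall (L : Type) (le : L -> L -> Prop), directed le ->
    forall (s : L -> cmap u v) (f : cmap u v),
      net_conv sigma le s f -> cont_conv u v le s f).
Proof.
  split; split.
  - exact (proper_dir u v hu hv sigma hsigma).
  - exact (proper_rev u v hu hv sigma hsigma).
  - exact (adm_dir u v hu hv sigma hsigma).
  - exact (adm_rev u v hu hv sigma hsigma).
Qed.
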